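(* Let $X$ be an infinite compact metrizable space and $h\colon X\to X$ a minimal homeomorphism. (1) If $F_1,F_2\subset X$ are closed and $V_1,V_2\subset X$ are open with $F_1\prec V_1$, $F_2\prec V_2$ and $V_1\cap V_2=\varnothing$, then $F_1\cup F_2\prec V_1\cup V_2$. (2) The union of finitely many thin sets in $X$ is thin.
   Context: For $F\subset X$ closed and $U\subset X$ open, write $F\prec U$ if there exist $M\in\mathbb{N}$, open sets $U_0,\dots,U_M\subset X$ and integers $d(0),\dots,d(M)$ such that $F\subset\bigcup_{j=0}^M U_j$, $h^{d(j)}(U_j)\subset U$ for all $j$, and the sets $h^{d(j)}(U_j)$ are pairwise disjoint. A closed set $F$ is thin if $F\prec U$ for every non-empty open $U\subset X$. *)

(* Defs.v *)
From HB Require Import structures.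
From mathcomp Require Import all_boot all_order all_algebra.
From mathcomp Require Import all_classical all_reals all_analysis.
Set Implicit Arguments. Unset Strict Implicit. Unset Printing Implicit Defensive.
Import Order.TTheory GRing.Theory Num.Theory.
Local Open Scope classical_set_scope.
Local Open Scope ring_scope.

Definition homeomorphism (X : topologicalType) (h hinv : X -> X) : Prop :=
  [/\ continuous h, continuous hinv, cancel h hinv & cancel hinv h].

Definition iterz (X : Type) (h hinv : X -> X) (d : int) : X -> X :=
  match d with
  | Posz n => iter n h
  | Negz n => iter n.+1 hinv
  end.

Definition minimal_homeo (X : topologicalType) (h hinv : X -> X) : Prop :=
  forall x : X, closure [set iterz h hinv d x | d in [set: int]] = [set: X].

Definition prec (X : topologicalType) (h hinv : X -> X) (F U : set X) : Prop :=
  exists (M : nat) (Us : nat -> set X) (d : nat -> int),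
    [/\ forall j, (j <= M)%N -> open (Us j),
        F `<=` \bigcup_(j in [set j : nat | (j <= M)%N]) Us j,
        forall j, (j <= M)%N -> iterz h hinv (d j) @` Us j `<=` U &
        forall i j, (i <= M)%N -> (j <= M)%N -> i <> j ->
          iterz h hinv (d i) @` Us i `&` iterz h hinv (d j) @` Us j = set0].

Definition thin (X : topologicalType) (h hinv : X -> X) (F : set X) : Prop :=
  closed F /\ forall U : set X, open U -> U !=set0 -> prec h hinv F U.

(* Main.v *)
Require Import Defs.
From HB Require Import structures.
From mathcomp Require Import all_boot all_order all_algebra.
From mathcomp Require Import all_classical all_reals all_analysis.
From mathcomp Require Import zify.
Import Order.TTheory GRing.Theory Num.Theory.
Local Open Scope classical_set_scope.
Local Open Scope ring_scope.

Lemma iter_cont (X : topologicalType) (f : X -> X) n :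
  continuous f -> continuous (iter n f).
Proof.
move=> cf; elim: n => [|n IH] x /=; first exact: cvg_id.
exact: (continuous_comp (IH x) (cf _)).
Qed.

Lemma iterz_cont (X : topologicalType) (h hinv : X -> X) d :
  continuous h -> continuous hinv -> continuous (iterz h hinv d).
Proof. by move=> ch chi; case: d => n /=; apply: iter_cont. Qed.

Lemma iter_inj (X : Type) (f : X -> X) n : injective f -> injective (iter n f).
Proof. by move=> fi; elim: n => [|n IH] //= x y /fi /IH. Qed.

Lemma iterz_inj (X : Type) (h hinv : X -> X) d :
  cancel h hinv -> cancel hinv h -> injective (iterz h hinv d).
Proof.
move=> c1 c2; case: d => n /=; apply: iter_inj; [exact: can_inj c1|exact: can_inj c2].
Qed.

Lemma prec_mono (X : topologicalType) (h hinv : X -> X) F F' U U' :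
  F' `<=` F -> U `<=` U' -> prec h hinv F U -> prec h hinv F' U'.
Proof.
move=> FF UU [M [Us [d [Ho Hc Hs Hdj]]]]; exists M, Us, d; split => //.
- by move=> x /FF /Hc.
- by move=> j jM x /(Hs j jM) /UU.
Qed.

Lemma prec_union (X : topologicalType) (h hinv : X -> X) F1 F2 V1 V2 :
  prec h hinv F1 V1 -> prec h hinv F2 V2 -> V1 `&` V2 = set0 ->
  prec h hinv (F1 `|` F2) (V1 `|` V2).
Proof.
move=> [M1 [U1 [d1 [Ho1 c1 s1 j1]]]] [M2 [U2 [d2 [Ho2 c2 s2 j2]]]] V0.
exists (M1 + M2).+1, (fun j => if (j <= M1)%N then U1 j else U2 (j - M1.+1)%N),
  (fun j => if (j <= M1)%N then d1 j else d2 (j - M1.+1)%N); split.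
- move=> j jM; case: ifP => jM1; [exact: Ho1|apply: Ho2; lia].
- move=> x [/c1 [j /= jM Ux]|/c2 [j /= jM Ux]].
    by exists j => /=; [lia|rewrite jM].
  exists (j + M1.+1)%N => /=; first lia.
  by rewrite ifF ?addnK //; lia.
- move=> j jM; case: ifP => jM1 x Hx.
    by left; apply: (s1 j jM1).
  by right; apply: (s2 _ _ x Hx); lia.
- move=> i j iM jM ij.
  have disj : forall A B, A `<=` V1 -> B `<=` V2 -> A `&` B = set0.
    move=> A B AV BV; apply/seteqP; split => // x [/AV ? /BV ?].
    by rewrite -V0.
  case: ifP => iM1; case: ifP => jM1.
  + exact: j1.
  + apply: disj; [exact: s1|apply: s2; lia].
  + rewrite setIC; apply: disj; [exact: s1|apply: s2; lia].
  + apply: j2; try lia.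
Qed.
Lemma no_isolated (X : topologicalType) (h hinv : X -> X) :
  compact [set: X] -> ~ finite_set [set: X] ->
  homeomorphism h hinv -> minimal_homeo h hinv ->
  forall x : X, ~ open [set x].
Proof.
move=> cX infX [ch chi c1 c2] mh x ox.
have allo : forall y : X, open [set y].
  move=> y; have : closure [set iterz h hinv d y | d in [set: int]] x.
    by rewrite mh.
  move=> /(_ [set x]) []; first by apply: open_nbhs_nbhs; split.
  move=> z [[d _ E] /= Ez]; subst z.
  have -> : [set y] = iterz h hinv d @^-1` [set x].
    apply/seteqP; split => w /=; first by move=> ->.
    by move=> E2; apply: (@iterz_inj _ h hinv d c1 c2); rewrite E2 Ez.
  by move/continuousP: (@iterz_cont _ h hinv d ch chi); apply.
pose F := [set A : set X | finite_set (~` A)].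
have FF : ProperFilter F.
  split.
  - by rewrite /F /= setC0.
  - split.
    + by rewrite /F /= setCT; exact: finite_set0.
    + by move=> A B; rewrite /F /= setCI finite_setU.
    + by move=> A B AB; apply: sub_finite_set => z /= nB nA; apply: nB; apply: AB.
have [p [_ clp]] := cX F FF (ltac:(rewrite /F /= setCT; exact: finite_set0)).
have [z [zp1 zp2]] := clp (~` [set p]) [set p]
  (ltac:(rewrite /F /= setCK; exact: finite_set1))
  (ltac:(apply: open_nbhs_nbhs; split => //; exact: allo)).
by apply: zp1.
Qed.

Lemma split_open (X : topologicalType) : hausdorff_space X ->
  (forall x : X, ~ open [set x]) ->
  forall U : set X, open U -> U !=set0 ->
  exists V1 V2 : set X, [/\ open V1, open V2, (V1 !=set0) & (V2 !=set0)] /\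
    [/\ V1 `<=` U, V2 `<=` U & V1 `&` V2 = set0].
Proof.
move=> hX noi U oU [x Ux].
have [y [Uy yx]] : exists y, U y /\ y <> x.
  apply: contrapT => H; apply: (noi x).
  suff -> : [set x] = U by [].
  apply/seteqP; split => z /=; first by move=> ->.
  by move=> Uz; apply: contrapT => zx; apply: H; exists z.
move: hX; rewrite open_hausdorff => /(_ x y) [].
  by apply/eqP => E; apply: yx.
move=> [A B] /= [xA yB] [oA oB /eqP AB].
exists (U `&` A), (U `&` B); split; split.
- exact: openI.
- exact: openI.
- by exists x; split => //; move: xA; rewrite inE.
- by exists y; split => //; move: yB; rewrite inE.
- by move=> z [].
- by move=> z [].
- apply/seteqP; split => // z [[_ Az] [_ Bz]].
  by rewrite -AB; split.
Qed.

Lemma prec_bigcup (X : topologicalType) (h hinv : X -> X) :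
  hausdorff_space X -> (forall x : X, ~ open [set x]) ->
  forall n (F : 'I_n -> set X), (forall i, thin h hinv (F i)) ->
  forall U, open U -> U !=set0 ->
  prec h hinv (\bigcup_(i in [set: 'I_n]) F i) U.
Proof.
move=> hX noi; elim=> [|n IH] F tF U oU U0.
  exists 0%N, (fun _ => set0), (fun _ => 0); split.
  - by move=> _ _; exact: open0.
  - by move=> x [[]].
  - by move=> j _ z [].
  - by move=> i j _ _ _; apply/seteqP; split => // z [[]].
have [V1 [V2 [[oV1 oV2 V10 V20] [V1U V2U V12]]]] := @split_open X hX noi U oU U0.
apply: (@prec_mono _ h hinv (F ord0 `|` \bigcup_(i in [set: 'I_n]) F (lift ord0 i))
   _ (V1 `|` V2)).
- move=> x [i _ Fx]; case: (unliftP ord0 i) => [j|] E; subst i.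
    by right; exists j.
  by left.
- by move=> x [/V1U|/V2U].
apply: prec_union => //.
- by apply: (tF ord0).2.
- apply: IH => // i; exact: tF.
Qed.

Theorem lemma3p7 (R : realType) (X : metricType R) (h hinv : X -> X) :
  compact [set: X] -> ~ finite_set [set: X] ->
  homeomorphism h hinv -> minimal_homeo h hinv ->
  (forall (F1 F2 V1 V2 : set X),
      closed F1 -> closed F2 -> open V1 -> open V2 ->
      prec h hinv F1 V1 -> prec h hinv F2 V2 -> V1 `&` V2 = set0 ->
      prec h hinv (F1 `|` F2) (V1 `|` V2)) /\
  (forall (n : nat) (F : 'I_n -> set X),
      (forall i, thin h hinv (F i)) ->
      thin h hinv (\bigcup_(i in [set: 'I_n]) F i)).
Proof.
move=> cX iX hh mh; split.
  by move=> F1 F2 V1 V2 _ _ _ _; exact: prec_union.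
move=> n F tF; split.
  by apply: closed_bigcup; [exact: finite_finset|move=> i _; exact: (tF i).1].
apply: prec_bigcup => //; first exact: metric_hausdorff.
exact: (@no_isolated _ h hinv cX iX hh mh).
Qed.
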